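(* For proposition letters $p,o,r,q$, the formula $\mathcal{K}hm(p,o,r)\wedge\mathcal{K}hm(r,o,q)\wedge\mathcal{U}(r\to o)\to\mathcal{K}hm(p,o,q)$ is valid, i.e., true at every state of every model.
   Context: Fix a countable set of proposition letters $\mathbf{P}$ and a countable non-empty set of action symbols $\Sigma$. Formulas: $\phi ::= p \mid \neg\phi \mid (\phi\wedge\phi) \mid \mathcal{K}hm(\phi,\phi,\phi)$; $\top,\bot,\to$ as usual; $\mathcal{U}\phi$ abbreviates $\mathcal{K}hm(\neg\phi,\top,\bot)$. A model is $(S,\mathcal{R},\mathcal{V})$ with $S\neq\emptyset$, $\mathcal{R}:\Sigma\to 2^{S\times S}$, $\mathcal{V}:S\to 2^{\mathbf{P}}$. For $\sigma=a_1\cdots a_n\in\Sigma^*$, $s\xrightarrow{\sigma}t$ means there is a path $s\xrightarrow{a_1}\cdots\xrightarrow{a_n}t$ ($s\xrightarrow{\epsilon}s$ for the empty sequence); $\sigma_k=a_1\cdots a_k$, $\sigma_0=\epsilon$. $\sigma$ is strongly $\chi$-executable at $s'$ if for each $0\le k<n$, every $t$ with $s'\xrightarrow{\sigma_k}t$ has an $a_{k+1}$-successor, and every $t$ with $s'\xrightarrow{\sigma_k}t$ for $0<k<n$ satisfies $\chi$. $\mathcal{M},s\vDash\mathcal{K}hm(\psi,\chi,\phi)$ iff there is $\sigma\in\Sigma^*$ such that for every $s'$ with $\mathcal{M},s'\vDash\psi$, $\sigma$ is strongly $\chi$-executable at $s'$ and $\mathcal{M},t\vDash\phi$ for all $t$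 with $s'\xrightarrow{\sigma}t$; atoms and Booleans are interpreted as usual ($\mathcal{M},s\vDash p$ iff $p\in\mathcal{V}(s)$). Consequently $\mathcal{M},s\vDash\mathcal{U}\phi$ iff $\phi$ holds at all states of $\mathcal{M}$. *)

(* Defs.v *)
From Stdlib Require Import List.
Import ListNotations.

Definition prop_letter := nat.

Inductive form (Sigma : Type) : Type :=
| Var : prop_letter -> form Sigma
| Neg : form Sigma -> form Sigma
| And : form Sigma -> form Sigma -> form Sigma
| Khm : form Sigma -> form Sigma -> form Sigma -> form Sigma.

Arguments Var {Sigma} _.
Arguments Neg {Sigma} _.
Arguments And {Sigma} _ _.
Arguments Khm {Sigma} _ _ _.

Definition Top {Sigma} : form Sigma := Neg (And (Var 0) (Neg (Var 0))).
Definition Bot {Sigma} : form Sigma := Neg Top.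
Definition Or {Sigma} (a b : form Sigma) : form Sigma := Neg (And (Neg a) (Neg b)).
Definition Imp {Sigma} (a b : form Sigma) : form Sigma := Neg (And a (Neg b)).
Definition Univ {Sigma} (a : form Sigma) : form Sigma := Khm (Neg a) Top Bot.

Record model (Sigma : Type) : Type := {
  St : Type;
  st_inhabited : inhabited St;
  Rel : Sigma -> St -> St -> Prop;
  Val : St -> prop_letter -> Prop
}.
Arguments St {Sigma} _.
Arguments Rel {Sigma} _ _ _ _.
Arguments Val {Sigma} _ _ _.

Fixpoint path {Sigma} (M : model Sigma) (sg : list Sigma) (s t : St M) : Prop :=
  match sg with
  | [] => s = t
  | a :: sg' => exists u, Rel M a s u /\ path M sg' u t
  end.

(* sigma_k = firstn k sigma. Strong chi-executability, with chi given
   semantically as a predicate on states. *)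
Definition strongly_exec {Sigma} (M : model Sigma) (chi : St M -> Prop)
    (sg : list Sigma) (s : St M) : Prop :=
  forall k, k < length sg ->
    forall t, path M (firstn k sg) s t ->
      (forall a, nth_error sg k = Some a -> exists u, Rel M a t u) /\
      (0 < k -> chi t).

Fixpoint sat {Sigma} (M : model Sigma) (s : St M) (f : form Sigma) : Prop :=
  match f with
  | Var p => Val M s p
  | Neg g => ~ sat M s g
  | And g h => sat M s g /\ sat M s h
  | Khm psi chi phi =>
      exists sg : list Sigma,
        forall s', sat M s' psi ->
          strongly_exec M (fun t => sat M t chi) sg s' /\
          (forall t, path M sg s' t -> sat M t phi)
  end.

Definition countable (T : Type) : Prop :=
  exists f : T -> nat, forall x y, f x = f y -> x = y.

Definition valid {Sigma} (f : form Sigma) : Prop :=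
  forall (M : model Sigma) (s : St M), sat M s f.

(* Main.v *)
Require Import Defs.
From Stdlib Require Import List Arith Lia Classical.
Import ListNotations.

Lemma path_app {Sigma} (M : model Sigma) (l1 l2 : list Sigma) s u :
  path M (l1 ++ l2) s u <-> exists t, path M l1 s t /\ path M l2 t u.
Proof.
  revert s; induction l1 as [|a l IH]; intros s; simpl.
  - split; [intros H; exists s; auto | intros [t [-> H]]; auto].
  - split.
    + intros [v [Hr Hp]]. apply IH in Hp as [t [H1 H2]]. exists t; split; eauto.
    + intros [t [[v [Hr H1]] H2]]. exists v; split; auto. apply IH; eauto.
Qed.

Lemma exec_path {Sigma} (M : model Sigma) chi sg s :
  strongly_exec M chi sg s -> exists t, path M sg s t.
Proof.
  intros He.
  assert (forall k, k <= length sg -> exists t, path M (firstn k sg) s t).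
  { induction k as [|k IH]; intros Hk.
    - exists s; reflexivity.
    - destruct (IH ltac:(lia)) as [t Ht].
      destruct (nth_error sg k) as [a|] eqn:E.
      2:{ apply nth_error_None in E; lia. }
      destruct (He k ltac:(lia) t Ht) as [Hs _].
      destruct (Hs a E) as [u Hu].
      exists u. rewrite (firstn_S_nth_error _ _ _ E) in * || idtac.
      assert (Hf : firstn (S k) sg = firstn k sg ++ [a]).
      { clear -E. revert sg E; induction k; intros [|b sg] E; simpl in *; try discriminate.
        - inversion E; subst; reflexivity.
        - f_equal. apply IHk; auto. }
      rewrite Hf. apply path_app. exists t; split; auto. simpl. exists u; auto. }
  destruct (H (length sg) ltac:(lia)) as [t Ht]. rewrite firstn_all in Ht. eauto.
Qed.

Theorem mainTheorem4 (Sigma : Type) (HSne : inhabited Sigma)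
  (HSc : countable Sigma) (p o r q : prop_letter) :
  @valid Sigma (Imp (And (And (Khm (Var p) (Var o) (Var r))
                       (Khm (Var r) (Var o) (Var q)))
                  (Univ (Imp (Var r) (Var o))))
             (Khm (Var p) (Var o) (Var q))).
Proof.
  intros M s. simpl. intros [[[[l1 H1] [l2 H2]] [l3 H3]] Hn]. apply Hn. clear Hn.
  assert (Hro : forall t, Val M t r -> Val M t o).
  { intros t Hr. apply NNPP. intros Ho.
    destruct (H3 t) as [He Hend].
    { intros Hc. apply Hc. split; auto. }
    destruct (exec_path _ _ _ _ He) as [u Hu].
    apply (Hend u Hu). intros [Hv Hnv]. contradiction. }
  exists (l1 ++ l2). intros s' Hp.
  destruct (H1 s' Hp) as [E1 F1].
  split.
  - intros k Hk t Ht. rewrite length_app in Hk.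
    rewrite firstn_app in Ht.
    destruct (lt_dec k (length l1)) as [Hlt|Hge].
    + replace (k - length l1) with 0 in Ht by lia. simpl in Ht. rewrite app_nil_r in Ht.
      rewrite nth_error_app1 by lia. apply E1; auto.
    + rewrite firstn_all2 in Ht by lia.
      apply path_app in Ht as [m [Hm1 Hm2]].
      assert (Hrm : Val M m r) by (apply F1; auto).
      destruct (H2 m Hrm) as [E2 F2].
      destruct (E2 (k - length l1) ltac:(lia) t Hm2) as [Ha Hc].
      rewrite nth_error_app2 by lia. split; auto.
      intros _. destruct (k - length l1) eqn:Ek.
      * simpl in Hm2. subst. auto.
      * apply Hc; lia.
  - intros t Ht. apply path_app in Ht as [m [Hm1 Hm2]].
    destruct (H2 m (F1 m Hm1)) as [_ F2]. auto.
Qed.
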